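(* For all $n\ge1$, $a_{\{0101,0102\}}(n)=a_{\{0101,0121\}}(n)=F_{2n-1}$, where $F_1=F_2=1$ and $F_k=F_{k-1}+F_{k-2}$ for $k\ge3$ are the Fibonacci numbers.
   Context: An ascent in an integer sequence $s_1\cdots s_m$ is an index $j$ with $s_j<s_{j+1}$; $\mathrm{asc}$ denotes the number of ascents. An ascent sequence is a sequence $x_1\cdots x_n$ of nonnegative integers with $x_1=0$ and $x_i\le 1+\mathrm{asc}(x_1\cdots x_{i-1})$ for all $i\ge2$. The reduction $\mathrm{red}(w)$ of an integer sequence $w$ replaces the $i$-th smallest distinct letter of $w$ by $i-1$; a pattern is a reduced sequence. A sequence $x$ contains a pattern $p=p_1\cdots p_k$ if there are indices $i_1<\cdots<i_k$ with $\mathrm{red}(x_{i_1}\cdots x_{i_k})=p$; otherwise $x$ avoids $p$. For a finite set $P$ of patterns, $a_P(n)$ denotes the number of ascent sequences of length $n$ avoiding every pattern in $P$. *)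

(* Defs.v *)
From mathcomp Require Import all_boot.
Set Implicit Arguments. Unset Strict Implicit. Unset Printing Implicit Defensive.

Fixpoint asc (s : seq nat) : nat :=
  match s with
  | a :: ((b :: _) as t) => (a < b) + asc t
  | _ => 0
  end.

Definition is_ascent_seq (x : seq nat) : bool :=
  (head 1 x == 0) &&
  all (fun i => nth 0 x i <= (asc (take i x)).+1) (iota 1 (size x).-1).

Definition red (w : seq nat) : seq nat :=
  map (fun a => index a (sort leq (undup w))) w.

Definition contains (x p : seq nat) : Prop :=
  exists m : bitseq, size m = size x /\ red (mask m x) = p.

Definition avoids_all (P : seq (seq nat)) (x : seq nat) : Prop :=
  forall p, p \in P -> ~ contains x p.

(* a_P(n) = N  :  the set of ascent sequences of length n avoiding all of P
   is finite with exactly N elements (enumerated by a duplicate-free list). *)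
Definition count_avoiders (P : seq (seq nat)) (n N : nat) : Prop :=
  exists s : seq (seq nat), uniq s /\ size s = N /\
    forall x, x \in s <-> [/\ size x = n, is_ascent_seq x & avoids_all P x].

Fixpoint fib (k : nat) : nat :=
  match k with
  | 0 => 0
  | 1 => 1
  | (j.+1 as k').+1 => fib k' + fib j
  end.

(* Main.v *)
Require Import Defs.
From mathcomp Require Import all_boot.
From mathcomp Require Import zify.
Set Implicit Arguments. Unset Strict Implicit. Unset Printing Implicit Defensive.

Lemma subseq_rcons2 (t x : seq nat) c d :
  subseq (rcons t c) (rcons x d) <-> subseq (rcons t c) x \/ (c = d /\ subseq t x).
Proof.
rewrite -subseq_rev !rev_rcons.
split.
- rewrite /=; case: eqP => [->|_] H.
  + right; split => //; by rewrite -subseq_rev.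
  + left; by rewrite -subseq_rev rev_rcons.
- case => [H|[-> H]].
  + apply: (subseq_trans _ (subseq_cons _ _)); by rewrite -rev_rcons subseq_rev.
  + by rewrite /= eqxx subseq_rev.
Qed.

Lemma contains_subseq x p : contains x p <-> exists t, subseq t x /\ red t = p.
Proof.
split.
- case=> m [_ H]; exists (mask m x); split => //; exact: mask_subseq.
- case=> t [/subseqP [m Hm ->] H]; by exists m.
Qed.

Definition u_of (t : seq nat) := sort leq (undup t).
Arguments u_of : simpl never.
Lemma redE t : red t = [seq index z (u_of t) | z <- t].
Proof. by []. Qed.

Lemma u_sorted t : sorted ltn (u_of t).
Proof. by rewrite ltn_sorted_uniq_leq sort_uniq undup_uniq sort_sorted //; exact: leq_total. Qed.

Lemma mem_u t z : (z \in u_of t) = (z \in t).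
Proof. by rewrite mem_sort mem_undup. Qed.

Lemma u_eq t r : sorted ltn r -> t =i r -> u_of t = r.
Proof.
move=> sr tr; apply: (irr_sorted_eq ltn_trans ltnn (u_sorted t) sr) => z.
by rewrite mem_u tr.
Qed.

Lemma red_nth t z : z \in t -> z = nth 0 (u_of t) (index z (u_of t)).
Proof. by move=> zt; rewrite nth_index // mem_u. Qed.

Lemma red_lt t i j : i < j -> j < size (u_of t) -> nth 0 (u_of t) i < nth 0 (u_of t) j.
Proof.
move=> ij js; apply: (sorted_ltn_nth ltn_trans 0 (u_sorted t)) => //.
by rewrite inE (ltn_trans ij js).
Qed.

Lemma srt_lt u i j : sorted ltn u -> i < j -> j < size u -> nth 0 u i < nth 0 u j.
Proof.
move=> su ij js; apply: (sorted_ltn_nth ltn_trans 0 su) => //.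
by rewrite inE (ltn_trans ij js).
Qed.

Lemma index_lt t z : z \in t -> index z (u_of t) < size (u_of t).
Proof. by move=> zt; rewrite index_mem mem_u. Qed.

Definition QA a b c d := [&& a == c, a < b & b <= d].
Definition QB a b c d := [&& a < b, d == b & (c == a) || (b < c)].

Lemma red4 t : size (red t) = size t.
Proof. by rewrite size_map. Qed.

Lemma red_A t : (red t = [:: 0; 1; 0; 1] \/ red t = [:: 0; 1; 0; 2]) <->
  exists a b c d, t = [:: a; b; c; d] /\ QA a b c d.
Proof.
split.
- move=> H.
  have : size t = 4 by rewrite -red4; case: H => ->.
  case: t H => [|a [|b [|c [|d [|]]]]] //= H _.
  exists a, b, c, d; split => //.
  have ma : a \in [:: a; b; c; d] by rewrite !inE eqxx.
  have mb : b \in [:: a; b; c; d] by rewrite !inE eqxx ?orbT.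
  have mc : c \in [:: a; b; c; d] by rewrite !inE eqxx ?orbT.
  have md : d \in [:: a; b; c; d] by rewrite !inE eqxx ?orbT.
  move: (red_nth ma) (red_nth mb) (red_nth mc) (red_nth md) (index_lt md) (index_lt mb).
  rewrite redE /= in H.
  have su := u_sorted [:: a; b; c; d].
  set u := u_of _ in H su *; clearbody u.
  case: H => [[-> -> -> ->]|[-> -> -> ->]] -> -> -> -> H1 H2; rewrite /QA eqxx /=.
  + by rewrite leqnn andbT srt_lt.
  + by apply/andP; split; [apply: srt_lt|apply: ltnW; apply: srt_lt].
- case=> a [b [c [d [-> /and3P [/eqP <- ab bd]]]]].
  case: (ltngtP b d) bd => // [bd|<-] _.
  + right; rewrite redE.
    have -> : u_of [:: a; b; a; d] = [:: a; b; d].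
      apply: u_eq; first by rewrite /= ab bd.
      move=> z; rewrite !inE; by case: (z == a); case: (z == b); case: (z == d).
    have ad := ltn_trans ab bd.
    by rewrite /= ?eqxx ?(ltn_eqF ab) ?(ltn_eqF ad) ?(ltn_eqF bd).
  + left; rewrite redE.
    have -> : u_of [:: a; b; a; b] = [:: a; b].
      apply: u_eq; first by rewrite /= ab.
      move=> z; rewrite !inE; by case: (z == a); case: (z == b).
    by rewrite /= ?eqxx ?(ltn_eqF ab).
Qed.

Lemma red_B t : (red t = [:: 0; 1; 0; 1] \/ red t = [:: 0; 1; 2; 1]) <->
  exists a b c d, t = [:: a; b; c; d] /\ QB a b c d.
Proof.
split.
- move=> H.
  have : size t = 4 by rewrite -red4; case: H => ->.
  case: t H => [|a [|b [|c [|d [|]]]]] //= H _.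
  exists a, b, c, d; split => //.
  have ma : a \in [:: a; b; c; d] by rewrite !inE eqxx.
  have mb : b \in [:: a; b; c; d] by rewrite !inE eqxx ?orbT.
  have mc : c \in [:: a; b; c; d] by rewrite !inE eqxx ?orbT.
  have md : d \in [:: a; b; c; d] by rewrite !inE eqxx ?orbT.
  move: (red_nth ma) (red_nth mb) (red_nth mc) (red_nth md) (index_lt mc) (index_lt mb).
  rewrite redE /= in H.
  have su := u_sorted [:: a; b; c; d].
  set u := u_of _ in H su *; clearbody u.
  case: H => [[-> -> -> ->]|[-> -> -> ->]] -> -> -> -> H1 H2; rewrite /QB eqxx /=.
  + by rewrite (srt_lt su) // eqxx.
  + by rewrite (srt_lt su) // (srt_lt su) // orbT.
- case=> a [b [c [d [-> /and3P [ab /eqP -> /orP [/eqP ->|bc]]]]]].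
  + left; rewrite redE.
    have -> : u_of [:: a; b; a; b] = [:: a; b].
      apply: u_eq; first by rewrite /= ab.
      move=> z; rewrite !inE; by case: (z == a); case: (z == b).
    by rewrite /= ?eqxx ?(ltn_eqF ab).
  + right; rewrite redE.
    have ac := ltn_trans ab bc.
    have -> : u_of [:: a; b; c; b] = [:: a; b; c].
      apply: u_eq; first by rewrite /= ab bc.
      move=> z; rewrite !inE; by case: (z == a); case: (z == b); case: (z == c).
    by rewrite /= ?eqxx ?(ltn_eqF ab) ?(ltn_eqF ac) ?(ltn_eqF bc).
Qed.

Definition avoidQ (Q : nat -> nat -> nat -> nat -> bool) x :=
  ~ exists a b c d, subseq [:: a; b; c; d] x /\ Q a b c d.

Lemma avoidsA x : avoids_all [:: [:: 0; 1; 0; 1]; [:: 0; 1; 0; 2]] x <-> avoidQ QA x.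
Proof.
split.
- move=> H [a [b [c [d [s q]]]]].
  have [] : red [:: a; b; c; d] = [:: 0; 1; 0; 1] \/ red [:: a; b; c; d] = [:: 0; 1; 0; 2].
    by apply/red_A; exists a, b, c, d.
  + move=> e; apply: (H [:: 0; 1; 0; 1]); first by rewrite inE eqxx.
    by apply/contains_subseq; exists [:: a; b; c; d].
  + move=> e; apply: (H [:: 0; 1; 0; 2]); first by rewrite !inE eqxx orbT.
    by apply/contains_subseq; exists [:: a; b; c; d].
- move=> H p pP /contains_subseq [t [s e]]; apply: H.
  have : red t = [:: 0; 1; 0; 1] \/ red t = [:: 0; 1; 0; 2].
    by move: pP; rewrite !inE e => /orP [/eqP ->|/eqP ->]; [left|right].
  case/red_A => a [b [c [d [et q]]]]; exists a, b, c, d; by rewrite -et.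
Qed.

Lemma avoidsB x : avoids_all [:: [:: 0; 1; 0; 1]; [:: 0; 1; 2; 1]] x <-> avoidQ QB x.
Proof.
split.
- move=> H [a [b [c [d [s q]]]]].
  have [] : red [:: a; b; c; d] = [:: 0; 1; 0; 1] \/ red [:: a; b; c; d] = [:: 0; 1; 2; 1].
    by apply/red_B; exists a, b, c, d.
  + move=> e; apply: (H [:: 0; 1; 0; 1]); first by rewrite inE eqxx.
    by apply/contains_subseq; exists [:: a; b; c; d].
  + move=> e; apply: (H [:: 0; 1; 2; 1]); first by rewrite !inE eqxx orbT.
    by apply/contains_subseq; exists [:: a; b; c; d].
- move=> H p pP /contains_subseq [t [s e]]; apply: H.
  have : red t = [:: 0; 1; 0; 1] \/ red t = [:: 0; 1; 2; 1].
    by move: pP; rewrite !inE e => /orP [/eqP ->|/eqP ->]; [left|right].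
  case/red_B => a [b [c [d [et q]]]]; exists a, b, c, d; by rewrite -et.
Qed.

Definition badend (Q : nat -> nat -> nat -> nat -> bool) x v :=
  exists a b c, subseq [:: a; b; c] x /\ Q a b c v.

Lemma avoidQ_rcons Q x v : avoidQ Q (rcons x v) <-> avoidQ Q x /\ ~ badend Q x v.
Proof.
split.
- move=> H; split.
  + case=> a [b [c [d [s q]]]]; apply: H; exists a, b, c, d; split => //.
    exact: (subseq_trans s (subseq_rcons _ _)).
  + case=> a [b [c [s q]]]; apply: H; exists a, b, c, v; split => //.
    by apply/(subseq_rcons2 [:: a; b; c]); right.
- case=> H1 H2 [a [b [c [d [s q]]]]].
  case/(subseq_rcons2 [:: a; b; c]): s => [s|[e s]].
  + by apply: H1; exists a, b, c, d.
  + by apply: H2; exists a, b, c; rewrite -e.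
Qed.
Lemma asc_rcons z y v : asc (rcons (z :: y) v) = asc (z :: y) + (last z y < v).
Proof.
elim: y z => [|w y IH] z; first by rewrite /= addn0.
rewrite rcons_cons.
have -> : asc (z :: w :: rcons y v) = (z < w) + asc (w :: rcons y v) by [].
have -> : asc (z :: w :: y) = (z < w) + asc (w :: y) by [].
by rewrite IH addnA.
Qed.

Lemma asc_rcons_ge z y v : asc (z :: y) <= asc (rcons (z :: y) v).
Proof. by rewrite asc_rcons leq_addr. Qed.

Lemma ascent_rcons_gen x v : 0 < size x ->
  is_ascent_seq (rcons x v) = is_ascent_seq x && (v <= (asc x).+1).
Proof.
move=> sx.
rewrite /is_ascent_seq size_rcons -pred_Sn -andbA.
have -> : head 1 (rcons x v) = head 1 x by case: x sx.
congr (_ && _).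
have {1}-> : size x = (size x).-1 + 1 by rewrite addn1 prednK.
rewrite iotaD all_cat /= andbT add1n prednK //.
congr (_ && _).
- apply: eq_in_all => i; rewrite mem_iota add1n prednK // => /andP [i1 iy].
  by rewrite -cats1 nth_cat iy take_cat iy.
- by rewrite -cats1 nth_cat ltnn subnn /= take_cat ltnn subnn take0 cats0.
Qed.

Lemma ascent_rcons z y v :
  is_ascent_seq (rcons (z :: y) v) = is_ascent_seq (z :: y) && (v <= (asc (z :: y)).+1).
Proof. exact: ascent_rcons_gen. Qed.

Fixpoint run {S : Type} (step : S -> nat -> option S) (s : S) (y : seq nat) : option S :=
  if y is v :: y' then (if step s v is Some s' then run step s' y' else None) else Some s.

Lemma run_rcons S (step : S -> nat -> option S) s y v :
  run step s (rcons y v) = obind (step^~ v) (run step s y).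
Proof.
elim: y s => [|w y IH] s /=; first by case: (step s v).
by case: (step s w).
Qed.

Lemma main_gen S (step : S -> nat -> option S) (Inv : S -> seq nat -> Prop) Q s0 :
  Inv s0 [:: 0] ->
  (forall s y v, Inv s (0 :: y) ->
     match step s v with
     | Some s' => Inv s' (rcons (0 :: y) v) /\ (v <= (asc (0 :: y)).+1 /\ ~ badend Q (0 :: y) v)
     | None => ~ (v <= (asc (0 :: y)).+1 /\ ~ badend Q (0 :: y) v)
     end) ->
  forall y, match run step s0 y with
  | Some s => Inv s (0 :: y) /\ (is_ascent_seq (0 :: y) /\ avoidQ Q (0 :: y))
  | None => ~ (is_ascent_seq (0 :: y) /\ avoidQ Q (0 :: y))
  end.
Proof.
move=> I0 Hstep; elim/last_ind => [|y v IH].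
- split => //; split => //.
  case=> a [b [c [d [/size_subseq s _]]]] //.
- rewrite run_rcons.
  have E : 0 :: rcons y v = rcons (0 :: y) v by [].
  rewrite E.
  case: (run step s0 y) IH => [s [Is [A1 A2]]|IH]; cbv beta iota.
  + have -> : obind (step^~ v) (Some s) = step s v by [].
    move: (Hstep s y v Is).
    case: (step s v) => [s'|]; cbv beta iota.
    * case=> Is' [H1 H2]; split => //; split.
        by rewrite ascent_rcons A1.
      by apply/avoidQ_rcons.
    * move=> H [B1 /avoidQ_rcons [B2 B3]]; apply: H; split => //.
      by move: B1; rewrite ascent_rcons => /andP [].
  + move=> [B1 /avoidQ_rcons [B2 B3]]; apply: IH; split => //.
    by move: B1; rewrite ascent_rcons => /andP [].
Qed.

Definition acc_gen S (step : S -> nat -> option S) s0 (x : seq nat) :=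
  match x with 0 :: y => isSome (run step s0 y) | _ => false end.

Lemma acc_genP S (step : S -> nat -> option S) (Inv : S -> seq nat -> Prop) Q s0 :
  Inv s0 [:: 0] ->
  (forall s y v, Inv s (0 :: y) ->
     match step s v with
     | Some s' => Inv s' (rcons (0 :: y) v) /\ (v <= (asc (0 :: y)).+1 /\ ~ badend Q (0 :: y) v)
     | None => ~ (v <= (asc (0 :: y)).+1 /\ ~ badend Q (0 :: y) v)
     end) ->
  forall x, acc_gen step s0 x <-> is_ascent_seq x /\ avoidQ Q x.
Proof.
move=> I0 Hs [|[|k] y] /=.
- by split => // [[]].
- move: (main_gen I0 Hs y); case: (run step s0 y) => [s [_ H]|H].
  + by split.
  + by split => // /H.
- by split => // [[]].
Qed.


Inductive stA := Inc of nat | Dec of nat.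

Definition stepA (s : stA) (v : nat) : option stA :=
  match s with
  | Inc m => if v == m then Some (Inc m) else if v == m.+1 then Some (Inc m.+1)
             else if v < m then Some (Dec v) else None
  | Dec u => if v <= u then Some (Dec v) else None
  end.

Definition InvA s x :=
  match s with
  | Inc m => [/\ (forall w, w < m -> subseq [:: w; w.+1] x),
                 (forall a b, a < b -> ~~ subseq [:: a; b; a] x),
                 asc x = m, (forall z, z \in x -> z <= m) & last 0 x = m]
  | Dec u => [/\ (forall w, w <= u -> subseq [:: w; w.+1] x),
                 (exists2 a, a <= u & subseq [:: a; u.+1; a] x),
                 (forall a b, a < b -> subseq [:: a; b; a] x -> u < b) & u <= asc x]
  end.

Lemma sub_rc (t x : seq nat) v : subseq t x -> subseq t (rcons x v).
Proof. move=> H; exact: (subseq_trans H (subseq_rcons _ _)). Qed.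

Lemma sub3_rc (a b c v : nat) (x : seq nat) : subseq [:: a; b; c] (rcons x v) ->
  subseq [:: a; b; c] x \/ (c = v /\ subseq [:: a; b] x).
Proof. by move/(subseq_rcons2 [:: a; b]). Qed.

Lemma sub3_rc' (a b v : nat) (x : seq nat) : subseq [:: a; b] x -> subseq [:: a; b; v] (rcons x v).
Proof. by move=> H; apply/(subseq_rcons2 [:: a; b]); right. Qed.

Lemma sub2_rc (a b : nat) (x : seq nat) : subseq [:: a; b] (rcons x b) <-> subseq [:: a; b] x \/ a \in x.
Proof.
split.
- by move/(subseq_rcons2 [:: a]) => [|[_]]; [left|rewrite sub1seq; right].
- by case=> [/sub_rc //|H]; apply/(subseq_rcons2 [:: a]); right; rewrite sub1seq.
Qed.

Lemma sub2_rc_ne (a b c : nat) (x : seq nat) : c != b -> subseq [:: a; b] (rcons x c) -> subseq [:: a; b] x.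
Proof. by move=> /eqP cb /(subseq_rcons2 [:: a]) [//|[/esym]]. Qed.

Lemma sub_mem (t x : seq nat) z : subseq t x -> z \in t -> z \in x.
Proof. by move=> /mem_subseq H /H. Qed.

Lemma stepA_ok s y v : InvA s (0 :: y) ->
  match stepA s v with
  | Some s' => InvA s' (rcons (0 :: y) v) /\ (v <= (asc (0 :: y)).+1 /\ ~ badend QA (0 :: y) v)
  | None => ~ (v <= (asc (0 :: y)).+1 /\ ~ badend QA (0 :: y) v)
  end.
Proof.
set x := 0 :: y.
have ascr : forall v, asc (rcons x v) = asc x + (last 0 x < v) by move=> w; exact: asc_rcons.
have lastx : last 0 x \in x by exact: (mem_last 0 y).
case: s => [m|u]; cbv beta iota delta [stepA InvA].
- case=> I1 I2 I3 I4 I5.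
  have nobad : forall w, ~ badend QA x w.
    move=> w; case=> a [b [c [S /and3P [/eqP ac ab _]]]].
    by move: S (I2 a b ab); rewrite -ac => ->.
  have [vm|mv|->] := ltngtP v m.
  + rewrite (ltn_eqF (ltnW vm : v < m.+1)); cbv beta iota.
    split; [|split => //; try exact: nobad; try by rewrite I3 (leq_trans (ltnW vm))].
    split.
    * by move=> w wv; apply: sub_rc; apply: I1 (leq_ltn_trans wv vm).
    * by exists v => //; apply: sub3_rc'; apply: I1.
    * move=> a b ab /sub3_rc [S|[av S]]; first by move: (I2 a b ab); rewrite S.
      by rewrite -av.
    * by rewrite ascr I3 (leq_trans (ltnW vm)) ?leq_addr.
  + case: eqP => [->|vm1]; cbv beta iota.
    * split; [|split => //; try exact: nobad; try by rewrite I3].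
      split.
      - move=> w; rewrite ltnS leq_eqVlt => /orP [/eqP ->|wm].
          by apply/sub2_rc; right; rewrite -I5.
        by apply: sub_rc; apply: I1.
      - move=> a b ab; apply/negP => /sub3_rc [S|[ea S]]; first by move: (I2 a b ab); rewrite S.
        have := I4 b (sub_mem S (_ : b \in [:: a; b])); rewrite ?inE ?eqxx ?orbT // leqNgt.
        move=> /(_ isT) /negP; apply; apply: ltn_trans ab; by rewrite ea.
      - by rewrite ascr I3 I5 ltnSn addn1.
      - by move=> z; rewrite mem_rcons inE => /orP [/eqP ->//|/I4 /leqW].
      - by rewrite last_rcons.
    * case=> H _; apply: vm1; apply/eqP; rewrite eqn_leq mv -I3 H.
      by [].
  + split; [|split => //; try exact: nobad; try by rewrite I3].
    split.
    * by move=> w wv; apply: sub_rc; apply: I1.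
    * move=> a b ab; apply/negP => /sub3_rc [S|[ea S]]; first by move: (I2 a b ab); rewrite S.
      have := I4 b (sub_mem S (_ : b \in [:: a; b])); rewrite ?inE ?eqxx ?orbT // leqNgt.
      by move=> /(_ isT) /negP; apply; rewrite -ea.
    * by rewrite ascr I3 I5 ltnn addn0.
    * by move=> z; rewrite mem_rcons inE => /orP [/eqP ->//|/I4].
    * by rewrite last_rcons.
- case=> I1 [a0 a0u S0] I3 I4.
  case: leqP => [vu|uv]; cbv beta iota.
  + split.
      split.
      * by move=> w wv; apply: sub_rc; apply: I1 (leq_trans wv vu).
      * by exists v => //; apply: sub3_rc'; apply: I1.
      * move=> a b ab /sub3_rc [S|[av S]]; first exact: (leq_ltn_trans vu (I3 a b ab S)).
        by rewrite -av.
      * by rewrite ascr (leq_trans vu) ?(leq_trans I4) ?leq_addr.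
    split; first by rewrite (leq_trans vu) // (leq_trans I4).
    case=> a [b [c [S /and3P [/eqP ac ab bv]]]].
    move: S; rewrite -ac => S.
    move: (I3 a b ab S) => ub.
    by move: (leq_trans ub bv); rewrite ltnNge vu.
  + case=> _; apply; exists a0, u.+1, a0; split => //.
    by rewrite /QA eqxx ltnS a0u.
Qed.


Inductive stB := Z | Run of nat | ZA of nat.

Definition stepB (s : stB) (v : nat) : option stB :=
  match s with
  | Z => if v == 0 then Some Z else if v == 1 then Some (Run 1) else None
  | Run l => if v == 0 then Some (ZA l) else if v == l then Some (Run l)
             else if v == l.+1 then Some (Run l.+1) else None
  | ZA M => if v == 0 then Some (ZA M) else if v == M.+1 then Some (Run M.+1) else None
  end.

Definition InvB s x :=
  match s with
  | Z => (forall z, z \in x -> z = 0) /\ asc x = 0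
  | Run l => [/\ 0 < l, asc x = l, (forall z, z \in x -> z <= l),
                (forall w, 0 < w < l -> subseq [:: 0; w; l] x)
              & (last 0 x = l /\ (forall c, c < l -> ~~ subseq [:: l; c] x))]
  | ZA M => [/\ 0 < M, asc x = M, (forall z, z \in x -> z <= M),
                (forall w, 0 < w <= M -> subseq [:: 0; w; 0] x) & last 0 x = 0]
  end.

Lemma sub0 (w : nat) y : subseq [:: 0; w] (0 :: y) = (w \in y).
Proof. by rewrite /= sub1seq. Qed.

Lemma last_in y l : last 0 (0 :: y) = l -> 0 < l -> l \in y.
Proof.
move=> <- lp; move: (mem_last 0 y); rewrite inE => /orP [/eqP e|//].
by move: lp; rewrite /= e.
Qed.

Lemma sub_pre (a b c : nat) : subseq [:: a; b] [:: a; b; c].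
Proof. by rewrite (@prefix_subseq _ [:: a; b] [:: c]). Qed.

Lemma sub_suf (a b c : nat) : subseq [:: b; c] [:: a; b; c].
Proof. exact: subseq_cons. Qed.

Lemma stepB_ok s y v : InvB s (0 :: y) ->
  match stepB s v with
  | Some s' => InvB s' (rcons (0 :: y) v) /\ (v <= (asc (0 :: y)).+1 /\ ~ badend QB (0 :: y) v)
  | None => ~ (v <= (asc (0 :: y)).+1 /\ ~ badend QB (0 :: y) v)
  end.
Proof.
have ascr : forall v, asc (rcons (0 :: y) v) = asc (0 :: y) + (last 0 (0 :: y) < v).
  by move=> w; exact: asc_rcons.
have lastx : last 0 (0 :: y) \in 0 :: y by exact: (mem_last 0 y).
set x := 0 :: y in ascr lastx *.
have memS : forall (a b : nat) t, subseq [:: a; b] t -> b \in t.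
  by move=> a b t S; apply: (mem_subseq S); rewrite !inE eqxx orbT.
have memS1 : forall (a b : nat) t, subseq [:: a; b] t -> a \in t.
  by move=> a b t S; apply: (mem_subseq S); rewrite !inE eqxx.
have memS3a : forall (a b c : nat) t, subseq [:: a; b; c] t -> a \in t.
  by move=> a b c t S; apply: (mem_subseq S); rewrite !inE eqxx.
have memS3c : forall (a b c : nat) t, subseq [:: a; b; c] t -> c \in t.
  by move=> a b c t S; apply: (mem_subseq S); rewrite !inE eqxx !orbT.
have memS3 : forall (a b c : nat) t, subseq [:: a; b; c] t -> b \in t.
  by move=> a b c t S; apply: (mem_subseq S); rewrite !inE eqxx orbT.
case: s => [|l|M]; cbv beta iota delta [stepB InvB].
- case=> I1 I2.
  have nobad : forall w, ~ badend QB x w.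
    move=> w [a [b [c [S /and3P [ab _ _]]]]].
    move: (I1 a (memS3a _ _ _ _ S)) (I1 b (memS3 _ _ _ _ S)).
    by move: ab => /[swap] -> /[swap] ->; rewrite ?inE ?eqxx.
  case: eqP => [->|v0]; cbv beta iota.
  + split; last by split => //; exact: nobad.
    split; last by rewrite ascr I2 ltn0.
    by move=> z; rewrite mem_rcons inE => /orP [/eqP //|/I1].
  case: eqP => [->|v1]; cbv beta iota.
  + split; last by split => //; rewrite I2.
    have l0 : last 0 x = 0 by apply: I1.
    split => //.
    * by rewrite ascr I2 l0.
    * by move=> z; rewrite mem_rcons inE => /orP [/eqP ->//|/I1 ->].
    * by case=> [|[]].
    * split; first by rewrite last_rcons.
      move=> c; rewrite ltnS leqn0 => /eqP ->; apply/negP => /(sub2_rc_ne (isT : 1 != 0)).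
      by move/memS1/I1.
  + rewrite I2; case=> H _; case: v H v0 v1 => [|[|]] //.
- case=> J0 J1 J2 J3 [J4 J5].
  have J3' : forall w, 0 < w <= l -> subseq [:: 0; w] x.
    move=> w /andP [w0]; rewrite leq_eqVlt => /orP [/eqP ->|wl].
      by rewrite sub0; apply: last_in.
    apply: subseq_trans (J3 w _) => //; first exact: sub_pre.
    by rewrite w0 wl.
  case: eqP => [->|v0]; cbv beta iota.
  + split; last first.
      split; first by [].
      by case=> a [b [c [S /and3P [ab /eqP b0 _]]]]; move: ab; rewrite -b0.
    split => //.
    * by rewrite ascr J1 ltn0 addn0.
    * by move=> z; rewrite mem_rcons inE => /orP [/eqP ->|/J2].
    * by move=> w wl; apply: sub3_rc'; apply: J3'.
    * by rewrite last_rcons.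
  case: eqP => [->|vl]; cbv beta iota.
  + split; last first.
      split; first by rewrite J1.
      case=> a [b [c [S /and3P [ab /eqP bl /orP [/eqP ca|bc]]]]].
      * move: S; rewrite ca -bl => S.
        have al : a < l by rewrite bl.
        by move: (J5 a al); rewrite (subseq_trans (sub_suf _ _ _) S).
      * by move: (J2 c (memS3c _ _ _ _ S)); rewrite leqNgt bl bc.
    split => //.
    * by rewrite ascr J1 J4 ltnn addn0.
    * by move=> z; rewrite mem_rcons inE => /orP [/eqP ->|/J2].
    * by move=> w wl; apply: sub_rc; apply: J3.
    * split; first by rewrite last_rcons.
      move=> c cl; apply/negP => /(sub2_rc_ne (negbT (gtn_eqF cl))) S.
      by move: (J5 c cl); rewrite S.
  case: eqP => [->|vl1]; cbv beta iota.
  + split; last first.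
      split; first by rewrite J1.
      case=> a [b [c [S /and3P [_ /eqP bl _]]]].
      by move: (J2 b (memS3 _ _ _ _ S)); rewrite -bl ltnn.
    split => //.
    * by rewrite ascr J1 J4 ltnSn addn1.
    * by move=> z; rewrite mem_rcons inE => /orP [/eqP ->|/J2 /leqW].
    * move=> w /andP [w0 wl]; apply: sub3_rc'; apply: J3'.
      by rewrite w0 -ltnS.
    * split; first by rewrite last_rcons.
      move=> c cl; apply/negP => /(sub2_rc_ne (negbT (gtn_eqF cl))) /memS1 /J2.
      by rewrite ltnn.
  + case=> H; apply.
    have vl' : v < l.
      move: H; rewrite J1 leq_eqVlt ltnS leq_eqVlt => /orP [/eqP //|/orP [/eqP //|//]].
    exists 0, v, l; split.
      apply: J3; rewrite vl' andbT lt0n; exact/eqP.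
    apply/and3P; split => //; [rewrite lt0n; exact/eqP | by rewrite vl' orbT].
- case=> K0 K1 K2 K3 K4.
  case: eqP => [->|v0]; cbv beta iota.
  + split; last first.
      split; first by [].
      by case=> a [b [c [S /and3P [ab /eqP b0 _]]]]; move: ab; rewrite -b0.
    split => //.
    * by rewrite ascr K1 ltn0 addn0.
    * by move=> z; rewrite mem_rcons inE => /orP [/eqP ->|/K2].
    * by move=> w wl; apply: sub_rc; apply: K3.
    * by rewrite last_rcons.
  case: eqP => [->|vM]; cbv beta iota.
  + split; last first.
      split; first by rewrite K1.
      case=> a [b [c [S /and3P [_ /eqP bl _]]]].
      by move: (K2 b (memS3 _ _ _ _ S)); rewrite -bl ltnn.
    split => //.
    * by rewrite ascr K1 K4 addn1.
    * by move=> z; rewrite mem_rcons inE => /orP [/eqP ->|/K2 /leqW].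
    * move=> w /andP [w0 wl]; apply: sub3_rc'.
      apply: subseq_trans (K3 w _); first exact: sub_pre.
      by rewrite w0 -ltnS.
    * split; first by rewrite last_rcons.
      move=> c cl; apply/negP => /(sub2_rc_ne (negbT (gtn_eqF cl))) /memS1 /K2.
      by rewrite ltnn.
  + case=> H; apply.
    have vM' : v <= M.
      by move: H; rewrite K1 leq_eqVlt ltnS => /orP [/eqP //|].
    exists 0, v, 0; split.
      apply: K3; rewrite vM' andbT lt0n; exact/eqP.
    apply/and3P; split => //; rewrite lt0n; exact/eqP.
Qed.


Lemma fib_rec (a w : nat -> nat) : a 0 = 1 -> w 0 = 0 ->
  (forall n, a n.+1 = a n + a n + w n) -> (forall n, w n.+1 = a n + w n) ->
  forall n, a n = fib (2 * n).+1 /\ w n = fib (2 * n).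
Proof.
move=> a0 w0 ha hw; elim=> [|n [IHa IHw]]; first by rewrite a0 w0.
rewrite ha hw IHa IHw mulnS !addSn !add0n.
have -> : fib (2 * n).+3 = fib (2 * n).+2 + fib (2 * n).+1 by [].
have -> : fib (2 * n).+2 = fib (2 * n).+1 + fib (2 * n) by [].
split; lia.
Qed.

Lemma run_inv S (step : S -> nat -> option S) (Inv : S -> seq nat -> Prop) Q s0 :
  Inv s0 [:: 0] ->
  (forall s y v, Inv s (0 :: y) ->
     match step s v with
     | Some s' => Inv s' (rcons (0 :: y) v) /\ (v <= (asc (0 :: y)).+1 /\ ~ badend Q (0 :: y) v)
     | None => ~ (v <= (asc (0 :: y)).+1 /\ ~ badend Q (0 :: y) v)
     end) ->
  forall y s, run step s0 y = Some s -> Inv s (0 :: y).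
Proof.
move=> I0 Hs y s E; move: (main_gen I0 Hs y); rewrite E; by case.
Qed.

Lemma acc_pre S (step : S -> nat -> option S) s0 x v :
  acc_gen step s0 (rcons x v) -> 0 < size x -> acc_gen step s0 x.
Proof.
case: x => [|[|k] y] //= ; rewrite run_rcons.
by case: (run step s0 y).
Qed.

Lemma acc_head S (step : S -> nat -> option S) s0 x :
  acc_gen step s0 x -> exists y, x = 0 :: y.
Proof. by case: x => [|[|k] y] //; exists y. Qed.

Definition ext (ch : seq nat -> seq nat) (b : seq (seq nat)) :=
  flatten [seq [seq rcons x v | v <- ch x] | x <- b].

Lemma mem_ext ch b z : z \in ext ch b <-> exists x v, [/\ x \in b, v \in ch x & z = rcons x v].
Proof.
split.
- case/flattenP => s /mapP [x xb ->] /mapP [v vc ->]; by exists x, v.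
- case=> x [v [xb vc ->]]; apply/flattenP; exists [seq rcons x v | v <- ch x].
    by apply/mapP; exists x.
  by apply/mapP; exists v.
Qed.

Lemma uniq_ext ch b : uniq b -> (forall x, x \in b -> uniq (ch x)) -> uniq (ext ch b).
Proof.
elim: b => [|x b IH] //= /andP [xb ub] uc.
rewrite cat_uniq IH ?andbT; last by move=> y yb; apply: uc; rewrite inE yb orbT.
rewrite map_inj_uniq ?uc ?inE ?eqxx //; last exact: rcons_injr.
apply/hasPn => z /flattenP [s /mapP [y yb ->] /mapP [v _ ->]].
apply/mapP => [[w _ /rcons_inj [e _]]].
by move: xb; rewrite -e yb.
by [].
Qed.

Lemma size_ext ch b : size (ext ch b) = sumn [seq size (ch x) | x <- b].
Proof. by elim: b => [|x b IH] //=; rewrite size_cat size_map IH. Qed.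

Lemma count_ext ch b (P : pred (seq nat)) :
  count P (ext ch b) = sumn [seq count (fun v => P (rcons x v)) (ch x) | x <- b].
Proof. by elim: b => [|x b IH] //=; rewrite count_cat count_map IH. Qed.

Lemma sumn_k (b : seq (seq nat)) k (P : pred (seq nat)) :
  sumn [seq k + P x | x <- b] = k * size b + count P b.
Proof. elim: b => [|x b IH] //=; first by rewrite muln0. rewrite IH mulnS; lia. Qed.

Definition accB := acc_gen stepB Z.

Lemma InvB0 : InvB Z [:: 0].
Proof. by split => // z; rewrite inE => /eqP. Qed.

Lemma accBP x : accB x <-> is_ascent_seq x /\ avoidQ QB x.
Proof. exact: (acc_genP InvB0 stepB_ok). Qed.

Definition chB (x : seq nat) := [:: 0; (asc x).+1] ++ (if last 0 x != 0 then [:: last 0 x] else [::]).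

Lemma accB_facts x : accB x -> last 0 x <= asc x /\ forall v, accB (rcons x v) = (v \in chB x).
Proof.
case: x => [|[|k] y] //; cbv beta iota delta [accB acc_gen] => H.
case E : (run stepB Z y) H => [s|] // _.
have I := run_inv InvB0 stepB_ok E.
rewrite /chB.
case: s E I => [|l|M] E I.
- case: I => I1 I2.
  have l0 : last 0 (0 :: y) = 0 by apply: I1; exact: (mem_last 0 y).
  rewrite l0 I2; split => // v.
  by rewrite rcons_cons /= run_rcons E /= !inE; case: (v == 0); case: (v == 1).
- case: I => J0 J1 J2 J3 [J4 J5].
  rewrite J4 J1 -lt0n J0; split => // v.
  rewrite rcons_cons /= run_rcons E /= !inE.
  by case: (v == 0); case: (v == l); case: (v == l.+1).
- case: I => K0 K1 K2 K3 K4.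
  rewrite K4 K1; split => // v.
  by rewrite rcons_cons /= run_rcons E /= !inE; case: (v == 0); case: (v == M.+1).
Qed.

Fixpoint BL n := if n is n'.+1 then ext chB (BL n') else [:: [:: 0]].

Lemma BL_mem n x : x \in BL n <-> size x = n.+1 /\ accB x.
Proof.
elim: n x => [|n IH] x.
- rewrite /= inE; split => [/eqP -> //|].
  by case: x => [|[|k] [|w y]] // [].
- rewrite /=; split.
  + case/mem_ext => x' [v [/IH [s1 a1] vc ->]]; split; first by rewrite size_rcons s1.
    by have [_ ->] := accB_facts a1.
  + case=> sx ax; move: sx ax; case/lastP: x => [|x' v] //.
    rewrite size_rcons => /eqP; rewrite eqSS => /eqP sx ax.
    have ax' : accB x' by apply: (acc_pre ax); rewrite sx.
    apply/mem_ext; exists x', v; split => //; first by apply/IH.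
    by have [_ <-] := accB_facts ax'.
Qed.

Lemma BL_uniq n : uniq (BL n).
Proof.
elim: n => [|n IH] //=; apply: uniq_ext => // x /BL_mem [_ ax].
have [la _] := accB_facts ax.
rewrite /chB; case: ifP => l0 //=; rewrite !inE andbT.
rewrite [0 == last 0 x]eq_sym (negbTE l0) orbF /= neq_ltn ltnS la orbT.
by [].
Qed.

Lemma BL_size n : size (BL n) = fib (2 * n).+1.
Proof.
have [] // := @fib_rec (fun n => size (BL n)) (fun n => count (fun x => last 0 x != 0) (BL n))
  erefl erefl _ _ n.
- move=> m /=; rewrite size_ext.
  have -> : [seq size (chB x) | x <- BL m] = [seq 2 + (last 0 x != 0) | x <- BL m].
    by apply: eq_map => x; rewrite /chB; case: (last 0 x).
  rewrite sumn_k; lia.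
- move=> m /=; rewrite count_ext.
  have -> : [seq count (fun v => last 0 (rcons x v) != 0) (chB x) | x <- BL m] =
            [seq 1 + (last 0 x != 0) | x <- BL m].
    apply: eq_map => x; rewrite /chB; under eq_count do rewrite last_rcons.
    by case: (last 0 x).
  rewrite sumn_k; lia.
Qed.


Definition accA := acc_gen stepA (Inc 0).

Lemma InvA0 : InvA (Inc 0) [:: 0].
Proof.
split => //.
- by move=> a b _; apply/negP => /size_subseq.
- by move=> z; rewrite inE => /eqP ->.
Qed.

Lemma accAP x : accA x <-> is_ascent_seq x /\ avoidQ QA x.
Proof. exact: (acc_genP InvA0 stepA_ok). Qed.

Definition sh s := match s with Inc m => Inc m.+1 | Dec u => Dec u.+1 end.

Lemma stepA_sh s v : stepA (sh s) v.+1 = omap sh (stepA s v).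
Proof.
case: s => [m|u] /=.
- rewrite !eqSS ltnS; case: (v == m) => //; case: (v == m.+1) => //; by case: (v < m).
- by rewrite ltnS; case: (v <= u).
Qed.

Lemma runA_sh s y : run stepA (sh s) (map S y) = omap sh (run stepA s y).
Proof.
elim: y s => [|v y IH] s //=.
rewrite stepA_sh; case: (stepA s v) => //= s'; exact: IH.
Qed.

Lemma runA_dec0 y s : run stepA (Dec 0) y = Some s -> all (fun z => z == 0) y.
Proof.
elim: y => [|v y IH] //=; rewrite leqn0; case: eqP => //= -> H.
by rewrite IH.
Qed.

Lemma runA_sh0 s y s' : run stepA (sh s) y = Some s' -> 0 \in y -> last 0 y = 0.
Proof.
elim: y s => [|v y IH] s //=.
case: v => [|v].
- have -> : stepA (sh s) 0 = Some (Dec 0) by case: s.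
  move=> /runA_dec0 H _; clear IH; case: y H => [|w y] // H.
  by apply/eqP; move/allP: H; apply; exact: mem_last.
- rewrite stepA_sh inE /=; case: (stepA s v) => //= s1 H y0.
  move: (IH s1 H y0); clear IH; case: y y0 {H} => //.
Qed.

Lemma accA_head x : accA x -> exists y, x = 0 :: y.
Proof. exact: acc_head. Qed.

Lemma accA_00 y : accA (0 :: 0 :: y) = accA (0 :: y).
Proof. by []. Qed.

Lemma accA_sh z : z != [::] -> accA (0 :: map S z) = accA z.
Proof.
case: z => [|[|k] y] //= _.
rewrite /accA /acc_gen /=.
have -> : Inc 1 = sh (Inc 0) by [].
by rewrite runA_sh; case: (run stepA (Inc 0) y).
Qed.

Lemma accA_rc0 x : accA x -> accA (rcons x 0).
Proof.
case: x => [|[|k] y] //.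
rewrite rcons_cons /accA /acc_gen run_rcons.
case: (run stepA (Inc 0) y) => //= s _.
by case: s => [[|m]|u].
Qed.

Lemma accA_v v y : accA (0 :: v :: y) -> v <= 1.
Proof. by case: v => [|[|v]]. Qed.

Definition st01 (x : seq nat) := take 2 x == [:: 0; 1].

Fixpoint ALW n : seq (seq nat) * seq (seq nat) :=
  if n is n'.+1 then
    let: (a, w) := ALW n' in
    let w' := [seq rcons x 0 | x <- w] ++ [seq 0 :: map S z | z <- a] in
    ([seq 0 :: x | x <- a] ++ w', w')
  else ([:: [:: 0]], [::]).

Lemma ALW_mem n :
  (forall x, x \in (ALW n).1 <-> size x = n.+1 /\ accA x) /\
  (forall x, x \in (ALW n).2 <-> [/\ size x = n.+1, accA x & st01 x]).
Proof.
elim: n => [|n [IHa IHw]].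
- split => x /=.
  + rewrite inE; split => [/eqP -> //|].
    by case: x => [|[|k] [|w y]] // [].
  + split => // -[s1 a1 t1].
    case: x s1 a1 t1 => [|v [|w y]] //= _ _; rewrite /st01 /= eqseq_cons andbF //.
- rewrite /=; case: (ALW n) IHa IHw => a w /= IHa IHw.
  have Hw' : forall x, x \in [seq rcons x 0 | x <- w] ++ [seq 0 :: map S z | z <- a] <->
                [/\ size x = n.+2, accA x & st01 x].
    move=> x; rewrite mem_cat; split.
    + case/orP => /mapP [x' H ->].
      * case/IHw: H => s1 a1 t1; split; first by rewrite size_rcons s1.
          exact: accA_rc0.
        case: x' s1 a1 t1 => [|p [|q y]] // s1 a1; rewrite /st01 /= ?take0 ?eqseq_cons ?andbF //.
      * case/IHa: H => s1 a1; split; first by rewrite /= size_map s1.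
          by rewrite accA_sh // -size_eq0 s1.
        by case/accA_head: a1 => y ->; rewrite /st01 /= take0.
    + case=> s1 a1; rewrite /st01.
      case: x s1 a1 => [|[|k] [|[|[|j]] y]] //= s1 a1 _.
      case/lastP: y s1 a1 => [|y v] s1 a1.
        by apply/orP; right; apply/mapP; exists [:: 0] => //; apply/IHa; move: s1 => /= [<-].
      case: (v =P 0) => [v0|v0].
      * apply/orP; left; apply/mapP; exists [:: 0, 1 & y]; last by rewrite v0.
        apply/IHw; split => //.
        - by move: s1; rewrite /= size_rcons => -[->].
        - by apply: (acc_pre (v := v)).
        - by rewrite /st01 /= take0.
      * apply/orP; right; apply/mapP.
        have y0 : 0 \notin rcons y v.
          apply/negP => H.
          move: a1; rewrite /accA /acc_gen /=.
          case E : (run stepA (Inc 1) (rcons y v)) => [s'|] // _.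
          have := @runA_sh0 (Inc 0) _ _ E H.
          by rewrite last_rcons.
        exists (0 :: map predn (rcons y v)).
          apply/IHa; split; first by move: s1 => /= -[<-]; rewrite size_map.
          move: a1; rewrite -(accA_sh (z := 0 :: map predn (rcons y v))) //=.
          rewrite -map_comp map_id_in // => z zy /=.
          by rewrite prednK // lt0n; apply: contraNneq y0 => <-.
        rewrite /= -map_comp map_id_in // => z zy /=.
        by rewrite prednK // lt0n; apply: contraNneq y0 => <-.
  split => // x; rewrite mem_cat; split.
  + case/orP => [/mapP [x' /IHa [s1 a1] ->]|/Hw' [] //].
    split; first by rewrite /= s1.
    by case/accA_head: (a1) => y ey; rewrite ey accA_00 -ey.
  + case=> s1 a1; apply/orP.
    case: x s1 a1 => [|[|k] [|[|[|j]] y]] // s1 a1.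
    * left; apply/mapP; exists (0 :: y) => //; apply/IHa; split => //.
      by move: s1 => /= -[->].
    * by right; apply/Hw'; split => //; rewrite /st01 /= take0.
Qed.

Lemma ALW_uniq n : uniq (ALW n).1 /\ uniq (ALW n).2.
Proof.
elim: n => [|n []] //.
have [Ma Mw] := ALW_mem n.
have [Ma' Mw'] := ALW_mem n.+1.
rewrite /= in Ma' Mw' *.
case: (ALW n) Ma Mw Ma' Mw' => a w /= Ma Mw Ma' Mw' ua uw.
have uw' : uniq ([seq rcons x 0 | x <- w] ++ [seq 0 :: map S z | z <- a]).
  rewrite cat_uniq map_inj_uniq ?uw; last exact: rcons_injl.
  rewrite map_inj_uniq ?ua ?andbT; last first.
    by move=> z1 z2 [] /(inj_map succn_inj).
  apply/hasPn => z /mapP [z' /Ma [s1 _] ->]; apply/mapP => [[x' _ e]].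
  move: (f_equal (last 0) e); rewrite last_rcons.
  by case: z' s1 {e} => [|v z'] //= _; rewrite (last_map S).
split => //.
rewrite cat_uniq map_inj_uniq ?ua ?uw' //; last by move=> ? ? [].
rewrite andbT; apply/hasPn => z /Mw' [_ _ t1]; apply/mapP => [[x' /Ma [_ a1] e]].
case/accA_head: a1 e => y -> e.
by move: t1; rewrite e.
Qed.

Lemma ALW_size n : size (ALW n).1 = fib (2 * n).+1.
Proof.
have [] // := @fib_rec (fun n => size (ALW n).1) (fun n => size (ALW n).2) erefl erefl _ _ n.
- move=> m /=; case: (ALW m) => a w /=; rewrite !size_cat !size_map; lia.
- move=> m /=; case: (ALW m) => a w /=; rewrite !size_cat !size_map; lia.
Qed.


Theorem theorem3p1 (n : nat) : 1 <= n ->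
  count_avoiders [:: [:: 0; 1; 0; 1]; [:: 0; 1; 0; 2]] n (fib (2 * n - 1)) /\
  count_avoiders [:: [:: 0; 1; 0; 1]; [:: 0; 1; 2; 1]] n (fib (2 * n - 1)).
Proof.
case: n => [|m] // _.
have -> : 2 * m.+1 - 1 = (2 * m).+1 by lia.
split.
- exists (ALW m).1; split; first by case: (ALW_uniq m).
  split; first exact: ALW_size.
  have [Ma _] := ALW_mem m.
  move=> x; split.
  + by move=> /Ma [s1 /accAP [a1 a2]]; split => //; apply/avoidsA.
  + by case=> s1 a1 a2; apply/Ma; split => //; apply/accAP; split => //; apply/avoidsA.
- exists (BL m); split; first exact: BL_uniq.
  split; first exact: BL_size.
  move=> x; split.
  + by move=> /BL_mem [s1 /accBP [a1 a2]]; split => //; apply/avoidsB.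
  + by case=> s1 a1 a2; apply/BL_mem; split => //; apply/accBP; split => //; apply/avoidsB.
Qed.
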